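(* Let $\lambda_1,\lambda_2$, $\Omega$, $\varphi$, $B$, $U$ be as in the context, with $(c,\theta)\in\Omega$, and let $G(u)=\int_0^u\frac{c-\varphi'(s)}{B(s)}\,ds$. Then: (1) $G$ is odd; (2) $G(u+U)=G(u)+G(U)$ for all $u\in\mathbb{R}$; (3) $G(kU)=kG(U)$ for all $k\in\mathbb{Z}$; (4) $G(kU/2)=kG(U)/2$ for all odd integers $k$.
   Context: Either $\lambda_1>\lambda_2>0$ or $\lambda_1=\lambda_2=1$. For $c>0$ put $\theta_c^+=\pi$ if $c>\sqrt2\lambda_1$ and $\theta_c^+=\arccos(1-c^2/\lambda_1^2)$ if $0<c\le\sqrt2\lambda_1$; $\Omega=\{(c,\theta): c>0,\ |\theta|<\theta_c^+\}$. For $(c,\theta)\in\Omega$: $D=\sin\theta/c$; $\varphi:\mathbb{R}\to\mathbb{R}$ is the global solution of $\varphi'(u)=\sqrt{c^2+2\cos\theta\,B(u)-D^2B(u)^2}$, $\varphi(0)=0$, where $B(u)=\lambda_1^2\cos^2\varphi(u)+\lambda_2^2\sin^2\varphi(u)$; $\varphi$ is an odd increasing bijection and $U>0$ is the unique number with $\varphi(U)=\pi$. *)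

(* Defs.v *)
From Stdlib Require Import Reals Lra.
From Coquelicot Require Import Coquelicot.
Open Scope R_scope.

Definition lambda_ok (l1 l2 : R) : Prop :=
  (l1 > l2 /\ l2 > 0) \/ (l1 = 1 /\ l2 = 1).

Definition theta_plus (l1 c : R) : R :=
  if Rlt_dec (sqrt 2 * l1) c then PI else acos (1 - c ^ 2 / l1 ^ 2).

Definition in_Omega (l1 c theta : R) : Prop :=
  c > 0 /\ Rabs theta < theta_plus l1 c.

Definition Bfun (l1 l2 : R) (phi : R -> R) (u : R) : R :=
  l1 ^ 2 * (cos (phi u)) ^ 2 + l2 ^ 2 * (sin (phi u)) ^ 2.

Definition Dconst (c theta : R) : R := sin theta / c.

Definition is_phi (l1 l2 c theta : R) (phi : R -> R) : Prop :=
  phi 0 = 0 /\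
  forall u, is_derive phi u
    (sqrt (c ^ 2 + 2 * cos theta * Bfun l1 l2 phi u
           - (Dconst c theta) ^ 2 * (Bfun l1 l2 phi u) ^ 2)).

Definition Gfun (l1 l2 c : R) (phi : R -> R) (u : R) : R :=
  RInt (fun s => (c - Derive phi s) / Bfun l1 l2 phi s) 0 u.

(* Main.v *)
Require Import Defs.
From Stdlib Require Import Reals ZArith.
From Coquelicot Require Import Coquelicot.
Open Scope R_scope.
From Stdlib Require Import Lra.

Definition bq (l1 l2 x : R) : R := l1 ^ 2 * (cos x) ^ 2 + l2 ^ 2 * (sin x) ^ 2.
Definition qq (c th b : R) : R := c ^ 2 + 2 * cos th * b - (Defs.Dconst c th) ^ 2 * b ^ 2.
Definition hq l1 l2 c th x := sqrt (qq c th (bq l1 l2 x)).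

Lemma bq_even l1 l2 x : bq l1 l2 (- x) = bq l1 l2 x.
Proof. unfold bq; rewrite cos_neg, sin_neg; ring. Qed.
Lemma bq_per l1 l2 x : bq l1 l2 (x + PI) = bq l1 l2 x.
Proof. unfold bq; rewrite neg_cos, neg_sin; ring. Qed.

Lemma l1_pos l1 l2 : lambda_ok l1 l2 -> 0 < l2 /\ l2 <= l1.
Proof. intros [[]|[]]; subst; lra. Qed.

Lemma bq_bounds l1 l2 x : lambda_ok l1 l2 -> l2 ^ 2 <= bq l1 l2 x <= l1 ^ 2.
Proof.
  intros H; destruct (l1_pos _ _ H).
  pose proof (sin2_cos2 x). unfold Rsqr in *. unfold bq.
  assert (l2 ^ 2 <= l1 ^ 2) by nra.
  assert (0 <= cos x ^ 2) by nra. assert (0 <= sin x ^ 2) by nra.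
  split; nra.
Qed.

Lemma key_cond l1 l2 c th : lambda_ok l1 l2 -> in_Omega l1 c th ->
  0 < c ^ 2 + (cos th - 1) * l1 ^ 2.
Proof.
  intros Hl [Hc Hth]. destruct (l1_pos _ _ Hl) as [H2 H3].
  assert (Hl1 : 0 < l1) by lra.
  pose proof (COS_bound th) as [Cb1 Cb2].
  unfold theta_plus in Hth. destruct (Rlt_dec (sqrt 2 * l1) c) as [Hlt|Hge].
  - assert (sqrt 2 * l1 > 0) by (pose proof (sqrt_lt_R0 2); nra).
    assert (c ^ 2 > (sqrt 2 * l1) ^ 2) by nra.
    rewrite Rpow_mult_distr in H0. replace (sqrt 2 ^ 2) with 2 in H0.
    2:{ simpl. rewrite Rmult_1_r, sqrt_sqrt; lra. }
    nra.
  - apply Rnot_lt_le in Hge.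
    assert (c ^ 2 <= (sqrt 2 * l1) ^ 2) by nra.
    rewrite Rpow_mult_distr in H. replace (sqrt 2 ^ 2) with 2 in H.
    2:{ simpl. rewrite Rmult_1_r, sqrt_sqrt; lra. }
    set (a := 1 - c ^ 2 / l1 ^ 2).
    assert (HL : 0 < l1 ^ 2) by nra.
    assert (Ha1 : -1 <= a <= 1).
    { unfold a; split.
      - assert (c ^ 2 / l1 ^ 2 <= 2). { apply Rmult_le_reg_r with (l1 ^ 2); [lra|]. unfold Rdiv; rewrite Rmult_assoc, Rinv_l; nra. } lra.
      - assert (0 <= c ^ 2 / l1 ^ 2) by (apply Rdiv_le_0_compat; nra). lra. }
    pose proof (acos_bound a) as [Ab1 Ab2].
    assert (Hct : cos (Rabs th) = cos th).
    { destruct (Rle_dec 0 th). rewrite Rabs_right; lra. rewrite Rabs_left by lra. apply cos_neg. }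
    assert (a < cos th).
    { rewrite <- Hct. rewrite <- (cos_acos a Ha1). apply cos_decreasing_1.
      all: try apply Rabs_pos. all: change (Rabs th < acos a) in Hth; lra. }
    assert ((a - 1) * l1 ^ 2 = - c ^ 2).
    { unfold a. field. lra. }
    nra.
Qed.

Lemma qq_pos l1 l2 c th x : lambda_ok l1 l2 -> in_Omega l1 c th ->
  0 < qq c th (bq l1 l2 x).
Proof.
  intros Hl Ho. pose proof (key_cond _ _ _ _ Hl Ho) as K.
  pose proof (bq_bounds _ _ x Hl) as [B1 B2]. destruct (l1_pos _ _ Hl).
  destruct Ho as [Hc _].
  set (b := bq l1 l2 x) in *.
  pose proof (sin2_cos2 th). unfold Rsqr in *.
  pose proof (COS_bound th) as [Cb1 Cb2].
  assert (E : qq c th b = (c ^ 2 + (cos th - 1) * b) * (c ^ 2 + (cos th + 1) * b) / c ^ 2).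
  { unfold qq, Defs.Dconst. field_simplify_eq; [|lra].
    replace (sin th ^ 2) with (1 - cos th ^ 2) by (simpl; lra). ring. }
  rewrite E. apply Rdiv_lt_0_compat; [|nra].
  assert (0 < l2 ^ 2) by nra.
  apply Rmult_lt_0_compat; nra.
Qed.


Lemma cont_invh l1 l2 c th x : lambda_ok l1 l2 -> in_Omega l1 c th ->
  continuous (fun y => / hq l1 l2 c th y) x.
Proof.
  intros Hl Ho. pose proof (qq_pos l1 l2 c th x Hl Ho).
  apply (@ex_derive_continuous R_AbsRing R_NormedModule). unfold hq, qq, bq in *. auto_derive.
  split; [exact H|]. split; [|exact I]. apply Rgt_not_eq, sqrt_lt_R0. exact H.
Qed.

Lemma cont_k l1 l2 c th x : lambda_ok l1 l2 -> in_Omega l1 c th ->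
  continuous (fun y => (c - hq l1 l2 c th y) / bq l1 l2 y) x.
Proof.
  intros Hl Ho. pose proof (qq_pos l1 l2 c th x Hl Ho).
  pose proof (bq_bounds l1 l2 x Hl). destruct (l1_pos _ _ Hl).
  assert (0 < bq l1 l2 x) by nra.
  apply (@ex_derive_continuous R_AbsRing R_NormedModule). unfold hq, qq, bq in *. auto_derive.
  simpl in *. split; [lra|split; [lra|exact I]].
Qed.

Lemma RInt_even (f : R -> R) : (forall x, continuous f x) -> (forall x, f (- x) = f x) ->
  forall x, RInt f 0 (- x) = - RInt f 0 x.
Proof.
  intros Hc He x.
  assert (H := RInt_comp_lin f (-1) 0 0 x).
  replace (-1 * 0 + 0) with 0 in H by ring. replace (-1 * x + 0) with (- x) in H by ring.
  rewrite <- H. 2: apply ex_RInt_continuous; auto.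
  rewrite (RInt_ext _ (fun y => -1 * f y)).
  2:{ intros y _. unfold scal; simpl; unfold mult; simpl. f_equal. rewrite <- He. f_equal. ring. }
  assert (S := RInt_scal f 0 x (-1) (ex_RInt_continuous _ _ _ (fun z _ => Hc z))).
  unfold scal in S; simpl in S; unfold mult in S; simpl in S. rewrite S. change (@eq R (-1 * RInt f 0 x) (- RInt f 0 x)). ring.
Qed.

Lemma RInt_per (f : R -> R) P : (forall x, continuous f x) -> (forall x, f (x + P) = f x) ->
  forall x, RInt f 0 (x + P) = RInt f 0 x + RInt f 0 P.
Proof.
  intros Hc He x.
  rewrite <- (RInt_Chasles f 0 P (x + P)) by (apply ex_RInt_continuous; auto).
  assert (H := RInt_comp_lin f 1 P 0 x).
  replace (1 * 0 + P) with P in H by ring. replace (1 * x + P) with (x + P) in H by ring.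
  rewrite <- H. 2: apply ex_RInt_continuous; auto.
  rewrite (RInt_ext _ f 0 x).
  2:{ intros y _. unfold scal; simpl; unfold mult; simpl. rewrite Rmult_1_l.
      replace (1 * y + P) with (y + P) by ring. apply He. }
  unfold plus; simpl.
  change (@eq R (RInt f 0 P + RInt f 0 x) (RInt f 0 x + RInt f 0 P)). ring.
Qed.

Lemma deriv_one (F : R -> R) : (forall x, is_derive F x 1) -> forall u, F u = F 0 + u.
Proof.
  intros H u.
  assert (E := is_RInt_derive F (fun _ => 1) 0 u (fun x _ => H x) (fun x _ => continuous_const 1 x)).
  apply is_RInt_unique in E. rewrite RInt_const in E.
  unfold minus, plus, opp, scal in E; simpl in E; unfold mult in E; simpl in E. lra.
Qed.

Definition Tf l1 l2 c th x := RInt (fun y => / hq l1 l2 c th y) 0 x.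

Lemma hq_pos l1 l2 c th x : lambda_ok l1 l2 -> in_Omega l1 c th -> 0 < hq l1 l2 c th x.
Proof. intros. apply sqrt_lt_R0, qq_pos; auto. Qed.

Lemma Tf_deriv l1 l2 c th x : lambda_ok l1 l2 -> in_Omega l1 c th ->
  is_derive (Tf l1 l2 c th) x (/ hq l1 l2 c th x).
Proof.
  intros Hl Ho. unfold Tf.
  apply (is_derive_RInt (fun y => / hq l1 l2 c th y) _ 0).
  - apply filter_forall. intros b. apply (@RInt_correct R_CompleteNormedModule), ex_RInt_continuous.
    intros; apply cont_invh; auto.
  - apply cont_invh; auto.
Qed.

Lemma Tf_lt l1 l2 c th x y : lambda_ok l1 l2 -> in_Omega l1 c th -> x < y ->
  Tf l1 l2 c th x < Tf l1 l2 c th y.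
Proof.
  intros Hl Ho Hxy. unfold Tf.
  rewrite <- (RInt_Chasles _ 0 x y) by (apply ex_RInt_continuous; intros; apply cont_invh; auto).
  assert (0 < RInt (fun y => / hq l1 l2 c th y) x y).
  { apply RInt_gt_0; auto. intros; apply Rinv_0_lt_compat, hq_pos; auto.
    intros; apply cont_invh; auto. }
  unfold plus; simpl. lra.
Qed.

Lemma Tf_inj l1 l2 c th x y : lambda_ok l1 l2 -> in_Omega l1 c th ->
  Tf l1 l2 c th x = Tf l1 l2 c th y -> x = y.
Proof.
  intros Hl Ho E. destruct (Rtotal_order x y) as [h|[h|h]]; auto.
  - pose proof (Tf_lt _ _ _ _ _ _ Hl Ho h). lra.
  - pose proof (Tf_lt _ _ _ _ _ _ Hl Ho h). lra.
Qed.

Lemma hq_even l1 l2 c th x : hq l1 l2 c th (- x) = hq l1 l2 c th x.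
Proof. unfold hq. rewrite bq_even. reflexivity. Qed.
Lemma hq_per l1 l2 c th x : hq l1 l2 c th (x + PI) = hq l1 l2 c th x.
Proof. unfold hq. rewrite bq_per. reflexivity. Qed.

Lemma Tf_odd l1 l2 c th x : lambda_ok l1 l2 -> in_Omega l1 c th ->
  Tf l1 l2 c th (- x) = - Tf l1 l2 c th x.
Proof.
  intros Hl Ho. unfold Tf. apply RInt_even.
  - intros; apply cont_invh; auto.
  - intros; rewrite hq_even; auto.
Qed.

Lemma Tf_per l1 l2 c th x : lambda_ok l1 l2 -> in_Omega l1 c th ->
  Tf l1 l2 c th (x + PI) = Tf l1 l2 c th x + Tf l1 l2 c th PI.
Proof.
  intros Hl Ho. unfold Tf. apply RInt_per.
  - intros; apply cont_invh; auto.
  - intros; rewrite hq_per; auto.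
Qed.

Lemma Tf_phi l1 l2 c th phi : lambda_ok l1 l2 -> in_Omega l1 c th -> is_phi l1 l2 c th phi ->
  forall u, Tf l1 l2 c th (phi u) = u.
Proof.
  intros Hl Ho [H0 Hd] u.
  rewrite (deriv_one (fun u => Tf l1 l2 c th (phi u))).
  - rewrite H0. unfold Tf. rewrite RInt_point. change (0 + u = u). ring.
  - intros x. 
    assert (E : 1 = scal (hq l1 l2 c th (phi x)) (/ hq l1 l2 c th (phi x))).
    { unfold scal; simpl; unfold mult; simpl. field. apply Rgt_not_eq, hq_pos; auto. }
    assert (Hd' : is_derive phi x (hq l1 l2 c th (phi x))) by exact (Hd x).
    assert (D := is_derive_comp (Tf l1 l2 c th) phi x _ _ (Tf_deriv l1 l2 c th (phi x) Hl Ho) Hd').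
    unfold scal in D; simpl in D; unfold mult in D; simpl in D.
    rewrite Rinv_r in D. exact D. apply Rgt_not_eq, hq_pos; auto.
Qed.

Lemma G_nat (G : R -> R) U : (forall u, G (u + U) = G u + G U) ->
  forall n u, G (u + INR n * U) = G u + INR n * G U.
Proof.
  intros HG n. induction n as [|n IH]; intros u.
  - simpl. rewrite Rmult_0_l, Rplus_0_r. ring.
  - rewrite S_INR. replace (u + (INR n + 1) * U) with ((u + INR n * U) + U) by ring.
    rewrite HG, IH. ring.
Qed.

Lemma G_Z (G : R -> R) U : (forall u, G (u + U) = G u + G U) ->
  forall m u, G (u + IZR m * U) = G u + IZR m * G U.
Proof.
  intros HG m u. destruct m as [|p|p].
  - simpl. rewrite Rmult_0_l, Rplus_0_r. ring.
  - rewrite <- positive_nat_Z, <- INR_IZR_INZ. apply G_nat; auto.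
  - replace (IZR (Z.neg p)) with (- INR (Pos.to_nat p)).
    2:{ rewrite INR_IZR_INZ, positive_nat_Z. reflexivity. }
    pose proof (G_nat G U HG (Pos.to_nat p) (u + - INR (Pos.to_nat p) * U)) as E.
    replace (u + - INR (Pos.to_nat p) * U + INR (Pos.to_nat p) * U) with u in E by ring.
    lra.
Qed.

Theorem proposition5p4 (l1 l2 c theta : R) (phi : R -> R) (U : R) :
  lambda_ok l1 l2 ->
  in_Omega l1 c theta ->
  is_phi l1 l2 c theta phi ->
  U > 0 -> phi U = PI ->
  (forall u, Gfun l1 l2 c phi (- u) = - Gfun l1 l2 c phi u) /\
  (forall u, Gfun l1 l2 c phi (u + U) = Gfun l1 l2 c phi u + Gfun l1 l2 c phi U) /\
  (forall k : Z, Gfun l1 l2 c phi (IZR k * U) = IZR k * Gfun l1 l2 c phi U) /\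
  (forall k : Z, Z.odd k = true ->
     Gfun l1 l2 c phi (IZR k * U / 2) = IZR k * Gfun l1 l2 c phi U / 2).
Proof.
  intros Hl Ho Hp HU HphiU.
  pose proof (Tf_phi _ _ _ _ _ Hl Ho Hp) as TP.
  destruct Hp as [H0 Hd].
  assert (Hd' : forall x, is_derive phi x (hq l1 l2 c theta (phi x))) by exact Hd.
  assert (Podd : forall u, phi (- u) = - phi u).
  { intros u. apply (Tf_inj l1 l2 c theta); auto.
    rewrite TP, Tf_odd, TP; auto. }
  assert (Pper : forall u, phi (u + U) = phi u + PI).
  { intros u. apply (Tf_inj l1 l2 c theta); auto.
    rewrite TP, Tf_per, TP, <- HphiU, TP; auto. }
  set (k := fun x => (c - hq l1 l2 c theta x) / bq l1 l2 x).
  set (f := fun s => k (phi s)).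
  assert (GE : forall u, Gfun l1 l2 c phi u = RInt f 0 u).
  { intros u. unfold Gfun. apply RInt_ext. intros x _.
    rewrite (is_derive_unique _ _ _ (Hd' x)). reflexivity. }
  assert (Fc : forall x, continuous f x).
  { intros x. unfold f. apply (continuous_comp phi k).
    - apply (@ex_derive_continuous R_AbsRing R_NormedModule). eexists; apply Hd'.
    - apply cont_k; auto. }
  assert (Fe : forall x, f (- x) = f x).
  { intros x. unfold f, k. rewrite Podd, hq_even, bq_even. reflexivity. }
  assert (Fp : forall x, f (x + U) = f x).
  { intros x. unfold f, k. rewrite Pper, hq_per, bq_per. reflexivity. }
  assert (G1 : forall u, RInt f 0 (- u) = - RInt f 0 u) by (apply RInt_even; auto).
  assert (G2 : forall u, RInt f 0 (u + U) = RInt f 0 u + RInt f 0 U) by (apply RInt_per; auto).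
  assert (G0 : RInt f 0 0 = 0) by (rewrite RInt_point; reflexivity).
  assert (G3 := G_Z (fun u => RInt f 0 u) U G2). simpl in G3.
  assert (Gh : RInt f 0 (U / 2) = RInt f 0 U / 2).
  { pose proof (G2 (- (U / 2))) as E. rewrite G1 in E.
    replace (- (U / 2) + U) with (U / 2) in E by field. lra. }
  split; [|split; [|split]]; intros; rewrite !GE.
  - apply G1.
  - apply G2.
  - pose proof (G3 k0 0) as E. rewrite Rplus_0_l, G0 in E. lra.
  - pose proof (Z.div2_odd k0) as Ek. rewrite H in Ek. change (Z.b2z true) with 1%Z in Ek.
    assert (Ik : IZR k0 = 2 * IZR (Z.div2 k0) + 1).
    { rewrite Ek at 1. rewrite plus_IZR, mult_IZR. reflexivity. }
    rewrite Ik. replace ((2 * IZR (Z.div2 k0) + 1) * U / 2) with (U / 2 + IZR (Z.div2 k0) * U) by field.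
    rewrite G3, Gh. field.
Qed.
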